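(* Let $p$ be an odd prime, $R=F_p+vF_p$ with $v^2=v$, let $\vartheta=1-2v$ or $\vartheta=-1+2v$, and let $C$ be a $\vartheta$-constacyclic code of length $n$ over $R$ with generating set in standard form $\{vg_{1-v}(x),(1-v)g_v(x)\}$. Then: (1) $\phi_\vartheta(C^\perp)=[h_{1-v}^*(x)h_v^*(x)]$; (2) $\phi_\vartheta(C^\perp)=(\phi_\vartheta(C))^\perp$.
   Context: Write $\vartheta=\lambda+v\mu$ with $\lambda,\mu\in F_p$. A $\vartheta$-constacyclic code of length $n$ over $R$ is an $R$-submodule of $R^n$ closed under $(c_0,\dots,c_{n-1})\mapsto(\vartheta c_{n-1},c_0,\dots,c_{n-2})$, identified with an ideal of $R[x]/\langle x^n-\vartheta\rangle$ via $(c_i)\mapsto\sum c_ix^i$. Duals are with respect to the standard Euclidean inner product (on $R^n$ and on $F_p^{2n}$). A set $\{vg_1(x),(1-v)g_2(x)\}$ is a generating set in standard form for $C$ if it generates $C$ as an ideal, each $g_i\in F_p[x]$ is monic or $0$, $g_1\mid x^n-(\lambda+\mu)$ if $g_1\ne0$, and $g_2\mid x^n-\lambda$ if $g_2\ne0$. Let $h_{1-v},h_v\in F_p[x]$ be given by $g_{1-v}h_{1-v}=x^n-(\lambda+\mu)$ and $g_vh_v=x^n-\lambda$; for $h\in\{h_{1-v},h_v\}$, $h^*(x)=\frac{1}{h(0)}x^{\deg h}h(1/x)$. The Gray map $\phi_\vartheta:R^n\to F_p^{2n}$ sends $(c_0,\dots,c_{n-1})$ with $c_i=r_i+vq_i$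 to $(\lambda(\lambda+\mu)q_0,\dots,\lambda(\lambda+\mu)q_{n-1},-\mu r_0-(\lambda+\mu)q_0,\dots,-\mu r_{n-1}-(\lambda+\mu)q_{n-1})$; equivalently, in polynomial form, $r(x)+vq(x)\mapsto\lambda(\lambda+\mu)q(x)+x^n[-\mu r(x)-(\lambda+\mu)q(x)]\in F_p[x]/\langle x^{2n}-1\rangle$. For a monic divisor $g$ of $x^{2n}-1$, $[g(x)]$ denotes the cyclic code (ideal of $F_p[x]/\langle x^{2n}-1\rangle$) generated by $g$. *)

(* Defs.v *)
From HB Require Import structures.
From mathcomp Require Import all_boot all_order all_algebra.
Set Implicit Arguments. Unset Strict Implicit. Unset Printing Implicit Defensive.
Import Order.TTheory GRing.Theory Num.Theory.
Local Open Scope ring_scope.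

(* The ring R = F_p + v F_p with v^2 = v.                                  *)
(* We realize it concretely as the (commutative) product ring F_p x F_p,   *)
(* with F_p embedded diagonally (c |-> (c,c)) and v := (0,1).  Then         *)
(* v^2 = v, and every element a = (a1,a2) is uniquely r + v q with          *)
(* r = a1, q = a2 - a1 (see [Rdecomp] below).                               *)
Definition Rp (p : nat) : Type := ('F_p * 'F_p)%type.
Definition vR (p : nat) : Rp p := (0, 1).
Definition embF (p : nat) (c : 'F_p) : Rp p := (c, c).
Definition rpart (p : nat) (a : Rp p) : 'F_p := a.1.
Definition qpart (p : nat) (a : Rp p) : 'F_p := a.2 - a.1.

Lemma vR_idem (p : nat) : vR p * vR p = vR p.
Proof. by rewrite /vR; congr pair; rewrite ?mulr0 ?mulr1. Qed.

Lemma Rdecomp (p : nat) (a : Rp p) :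
  a = embF (rpart a) + vR p * embF (qpart a).
Proof.
case: a => a1 a2; rewrite /embF /vR /rpart /qpart /=.
congr pair => /=; rewrite ?mul0r ?mul1r ?addr0 //.
by rewrite addrC subrK.
Qed.

Definition thetaR (p : nat) (lam mu : 'F_p) : Rp p := embF lam + vR p * embF mu.

(* The ideal <v g1(x), (1-v) g2(x)> of R[x]/<x^n - theta>, each class being
   represented by its reduced representative (degree < n), i.e. a vector of
   R^n via (c_i) <-> sum c_i x^i. *)
Definition constaIdeal (p n : nat) (lam mu : 'F_p) (g1 g2 : {poly 'F_p})
  : {poly Rp p} -> Prop :=
  fun c => exists a b : {poly Rp p},
    c = Pdiv.Ring.rmodp (a * ((vR p)%:P * map_poly (@embF p) g1)
               + b * ((1 - vR p)%:P * map_poly (@embF p) g2))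
              ('X^n - (thetaR lam mu)%:P).

Definition dualR (p n : nat) (C : {poly Rp p} -> Prop) : {poly Rp p} -> Prop :=
  fun d => (size d <= n)%N /\
    forall c, C c -> \sum_(i < n) c`_i * d`_i = 0.

Definition dualF (p m : nat) (S : {poly 'F_p} -> Prop) : {poly 'F_p} -> Prop :=
  fun y => (size y <= m)%N /\
    forall c, S c -> \sum_(i < m) c`_i * y`_i = 0.

Definition grayPhi (p n : nat) (lam mu : 'F_p) (c : {poly Rp p}) : {poly 'F_p} :=
  let r := map_poly (@rpart p) c in
  let q := map_poly (@qpart p) c in
  (lam * (lam + mu)) *: q + 'X^n * (- (mu *: r) - (lam + mu) *: q).

Definition grayImage (p n : nat) (lam mu : 'F_p) (S : {poly Rp p} -> Prop)
  : {poly 'F_p} -> Prop :=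
  fun y => exists c, S c /\ y = grayPhi n lam mu c.

(* The cyclic code [g(x)] of length m: ideal of F_p[x]/<x^m - 1> generated by
   g, classes represented by reduced representatives. *)
Definition cyclicCode (p m : nat) (g : {poly 'F_p}) : {poly 'F_p} -> Prop :=
  fun y => exists a : {poly 'F_p}, y = (a * g) %% ('X^m - 1).

(* Reciprocal polynomial x^{deg h} h(1/x), and h^* = (1/h(0)) x^{deg h} h(1/x). *)
Definition recip (p : nat) (h : {poly 'F_p}) : {poly 'F_p} :=
  \poly_(i < size h) h`_((size h).-1 - i).
Definition hstar (p : nat) (h : {poly 'F_p}) : {poly 'F_p} :=
  (h`_0)^-1 *: recip h.

(* Main.v *)
Require Import Defs.
From HB Require Import structures.
From mathcomp Require Import all_boot all_order all_algebra.
From mathcomp Require Import zify ring.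
Set Implicit Arguments. Unset Strict Implicit. Unset Printing Implicit Defensive.
Import Order.TTheory GRing.Theory Num.Theory.
Local Open Scope ring_scope.

Section Rev.
Variable F : fieldType.
Implicit Types a b d q : {poly F}.

Definition revN (N : nat) (q : {poly F}) : {poly F} := \poly_(i < N) q`_(N.-1 - i).

Lemma coef_revN N q i : (revN N q)`_i = if (i < N)%N then q`_(N.-1 - i) else 0.
Proof. by rewrite coef_poly. Qed.

Lemma size_revN N q : (size (revN N q) <= N)%N.
Proof. exact: size_poly. Qed.

Lemma revND N a b : revN N (a + b) = revN N a + revN N b.
Proof. by apply/polyP=> i; rewrite coefD !coef_revN coefD; case: ifP; rewrite ?addr0. Qed.

Lemma revNZ N c a : revN N (c *: a) = c *: revN N a.
Proof. by apply/polyP=> i; rewrite coefZ !coef_revN coefZ; case: ifP; rewrite ?mulr0. Qed.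

Lemma revN0 N : revN N 0 = 0.
Proof. by apply/polyP=> i; rewrite coef_revN !coef0; case: ifP. Qed.

Lemma revN_sum N (I : Type) (r : seq I) (P : pred I) (G : I -> {poly F}) :
  revN N (\sum_(i <- r | P i) G i) = \sum_(i <- r | P i) revN N (G i).
Proof. exact: (big_morph _ (revND N) (revN0 N)). Qed.

Lemma revNK N q : (size q <= N)%N -> revN N (revN N q) = q.
Proof.
move=> sq; apply/polyP=> i; rewrite !coef_revN.
case: ltnP => iN; last by rewrite nth_default // (leq_trans sq).
rewrite ifT; last by lia.
by congr (q`_ _); lia.
Qed.

Lemma revN_Xn N k : revN N 'X^k = if (k < N)%N then 'X^(N.-1 - k) else 0.
Proof.
apply/polyP=> i; rewrite coef_revN !coefXn.
case: (ltnP k N) => kN; case: (ltnP i N) => iN; rewrite ?coefXn ?coef0 //.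
- by congr (_%:R); apply/eqP/eqP; lia.
- by case: eqP => //; lia.
- by case: eqP => //; lia.
Qed.

Lemma poly_expand A a : (size a <= A)%N -> a = \sum_(i < A) a`_i *: 'X^i.
Proof.
move=> sa; rewrite -poly_def; apply/polyP=> i; rewrite coef_poly.
by case: ltnP => // iA; rewrite nth_default // (leq_trans sa).
Qed.

Lemma revNM A B a b : (size a <= A)%N -> (size b <= B)%N ->
  revN (A + B).-1 (a * b) = revN A a * revN B b.
Proof.
move=> sa sb.
rewrite {1}(poly_expand sa) {1}(poly_expand sb) {2}(poly_expand sa) {2}(poly_expand sb).
transitivity (\sum_(i < A) \sum_(j < B)
   (a`_i * b`_j) *: 'X^(A.-1 - i + (B.-1 - j))).
  rewrite big_distrl revN_sum; apply: eq_bigr => i _.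
  rewrite big_distrr revN_sum; apply: eq_bigr => j _ /=.
  rewrite -scalerAl -scalerAr scalerA -exprD revNZ revN_Xn ifT; last first.
    by have := ltn_ord i; have := ltn_ord j; lia.
  by congr (_ *: 'X^_); have := ltn_ord i; have := ltn_ord j; lia.
rewrite !revN_sum big_distrl; apply: eq_bigr => i _.
rewrite big_distrr; apply: eq_bigr => j _ /=.
rewrite !revNZ !revN_Xn !ifT ?ltn_ord //.
by rewrite -scalerAl -scalerAr scalerA -exprD.
Qed.
End Rev.
Section Consta.
Variable F : fieldType.
Implicit Types a b c d g h P : {poly F}.
Variable n : nat.
Hypothesis n_gt0 : (0 < n)%N.
Variable s : F.
Local Notation f := ('X^n - s%:P).

Definition ipn (c d : {poly F}) := \sum_(i < n) c`_i * d`_i.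

Lemma size_f : size f = n.+1.
Proof. exact: size_XnsubC. Qed.

Lemma modf P : (size P <= n.*2)%N -> P %% f = take_poly n P + s *: drop_poly n P.
Proof.
move=> sP; apply/esym/(@modpP _ _ (drop_poly n P)); last first.
  rewrite size_f ltnS (leq_trans (size_polyD _ _)) // geq_max size_take_poly.
  by rewrite (leq_trans (size_scale_leq _ _)) // size_drop_poly; rewrite -?addnn; lia.
rewrite -{1}(poly_take_drop n P).
rewrite mulrBr [drop_poly n P * s%:P]mulrC mul_polyC.
by move: (take_poly _ _) (drop_poly n P * _) (s *: _) => x y z; ring.
Qed.

Lemma modf_coef P : (size P <= n.*2)%N ->
  (P %% f)`_n.-1 = P`_n.-1 + s * P`_(n.*2.-1).
Proof.
move=> sP; rewrite modf // coefD coefZ coef_take_poly coef_drop_poly ifT; last by rewrite -?addnn; lia.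
by congr (_ + s * P`_ _); rewrite -?addnn; lia.
Qed.

Lemma ip_rev c d : (size c <= n)%N -> ipn c d = (c * revN n d)`_n.-1.
Proof.
move=> sc; rewrite coefM /ipn prednK //; apply: eq_bigr => i _.
rewrite coef_revN ifT; last by rewrite -?addnn; lia.
by congr (_ * d`_ _); have := ltn_ord i; rewrite -?addnn; lia.
Qed.

Lemma key1 a d : (size d <= n)%N ->
  ipn (a %% f) d = ((a * revN n d) %% f)`_n.-1.
Proof.
move=> sd.
have sr : (size (a %% f)%R <= n)%N.
  by rewrite -ltnS -size_f ltn_modp -size_poly_eq0 size_f.
rewrite mulrC -modp_mul mulrC modf_coef; last first.
  apply: (leq_trans (size_polyMleq _ _)).
  by apply: (leq_trans (leq_pred _)); rewrite -addnn leq_add // size_revN.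
rewrite ip_rev // [X in _ + s * X]nth_default ?mulr0 ?addr0 //.
apply: (leq_trans (size_polyMleq _ _)).
by rewrite -!subn1 leq_sub2r // -addnn leq_add // size_revN.
Qed.

Lemma key2 g d : (size d <= n)%N ->
  (forall a, ipn ((a * g) %% f) d = 0) <-> (f %| g * revN n d).
Proof.
move=> sd; split=> [H | H a]; last first.
  rewrite key1 // -mulrA modp_eq0 ?coef0 //; exact: dvdp_mull.
rewrite /dvdp; apply/eqP; set E := (g * revN n d) %% f.
have sE : (size E <= n)%N.
  by rewrite -ltnS -size_f ltn_modp -size_poly_eq0 size_f.
apply/polyP=> m; rewrite coef0.
case: (ltnP m n) => mn; last by rewrite nth_default // (leq_trans sE).
have := H ('X^(n.-1 - m)); rewrite key1 // -mulrA -modp_mul.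
rewrite -/E modf_coef; last first.
  apply: (leq_trans (size_polyMleq _ _)); rewrite size_polyXn.
  by move: sE; move: (size E) => e; rewrite -?addnn; lia.
rewrite !coefXnM ifF; last by rewrite -?addnn; lia.
rewrite ifF; last by rewrite -?addnn; lia.
rewrite [X in _ + s * X]nth_default ?mulr0 ?addr0; last first.
  by apply: leq_trans sE _; rewrite -?addnn; lia.
by have -> : (n.-1 - (n.-1 - m))%N = m by rewrite -?addnn; lia.
Qed.

Lemma key3 g h d : g \is monic -> g * h = f -> (size d <= n)%N ->
  (forall a, ipn ((a * g) %% f) d = 0) <-> (h %| revN n d).
Proof.
move=> gm ghf sd; rewrite key2 // -ghf dvdp_mul2l //.
by rewrite -lead_coef_eq0 (eqP gm) oner_neq0.
Qed.

Lemma size_recip h : h`_0 != 0 -> size (revN (size h) h) = size h.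
Proof.
move=> h0; apply/eqP; rewrite eqn_leq size_revN /=.
case sh: (size h) => [|k] //.
have hk : (revN k.+1 h)`_k = h`_0 by rewrite coef_revN ltnSn subnn.
rewrite leqNgt; apply/negP; rewrite ltnS => /(nth_default 0).
by rewrite -/(nth 0 _ k) hk => /eqP; apply/negP.
Qed.

Lemma size_cofactor w h D N : h`_0 != 0 -> D = w * h -> (size D <= N)%N ->
  (size w <= N.+1 - size h)%N.
Proof.
move=> h0 -> sD.
have hn0 : h != 0 by apply: contraNneq h0 => ->; rewrite coef0.
have [->|wn0] := eqVneq w 0; first by rewrite size_poly0.
move: sD; rewrite size_mul //.
have : (0 < size h)%N by rewrite size_poly_gt0.
by move: (size w) (size h) => x y; lia.
Qed.

Lemma key4 h d : h`_0 != 0 -> (size h <= n.+1)%N -> (size d <= n)%N ->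
  (h %| revN n d) = (revN (size h) h %| d).
Proof.
move=> h0 shn sd.
have hn0 : h != 0 by apply: contraNneq h0 => ->; rewrite coef0.
have sh0 : (0 < size h)%N by rewrite size_poly_gt0.
apply/idP/idP => /dvdpP [w Hw].
  have sw := size_cofactor h0 Hw (size_revN n d).
  have -> : d = revN n (revN n d) by rewrite revNK.
  have E : n = ((n.+1 - size h) + size h).-1 by move: (size h) shn sh0 => x; lia.
  by rewrite Hw E revNM // dvdp_mulIr.
have sr := size_recip h0.
have h0' : (revN (size h) h)`_0 != 0.
  by rewrite coef_revN sh0 subn0 -lead_coefE lead_coef_eq0.
have sw := size_cofactor h0' Hw sd.
have E : n = ((n.+1 - size h) + size h).-1 by move: (size h) shn sh0 => x; lia.
rewrite Hw E revNM ?size_revN //; last by move: sw; rewrite sr.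
by rewrite (revNK (leqnn _)) dvdp_mulIr.
Qed.

End Consta.
Section Facts.
Variable F : fieldType.
Variable n : nat.
Hypothesis n_gt0 : (0 < n)%N.
Implicit Types g h : {poly F}.

Lemma hprops s g h : s != 0 -> g \is monic -> g * h = 'X^n - s%:P ->
  h`_0 != 0 /\ (size h <= n.+1)%N.
Proof.
move=> s0 gm ghf.
have gn0 : g != 0 by rewrite -lead_coef_eq0 (eqP gm) oner_neq0.
have hn0 : h != 0.
  by apply: contra_eqN ghf => /eqP ->; rewrite mulr0 eq_sym -size_poly_eq0 size_XnsubC.
split.
  have := congr1 (fun q : {poly F} => q`_0) ghf; rewrite /= coef0M coefB coefXn coefC.
  have -> : (0 == n)%N = false by case: (n) n_gt0.
  rewrite sub0r => E; apply/eqP => h00; move: E; rewrite h00 mulr0 => /eqP.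
  by rewrite eq_sym oppr_eq0 (negbTE s0).
move: (size_XnsubC s n_gt0); rewrite -ghf size_mul // => <-.
have : (0 < size g)%N by rewrite size_poly_gt0.
by move: (size g) (size h) => x y; lia.
Qed.

Lemma recip_dvd s g h : s * s = 1 -> g \is monic -> g * h = 'X^n - s%:P ->
  revN (size h) h %| 'X^n - s%:P.
Proof.
move=> ss gm ghf.
have s0 : s != 0 by apply: contra_eq_neq ss => ->; rewrite mulr0 eq_sym oner_neq0.
have [h0 shn] := hprops s0 gm ghf.
have gn0 : g != 0 by rewrite -lead_coef_eq0 (eqP gm) oner_neq0.
have hn0 : h != 0 by apply: contraNneq h0 => ->; rewrite coef0.
have E1 : revN n.+1 ('X^n - s%:P) = (- s) *: ('X^n - s%:P).
  have -> : 'X^n - s%:P = 'X^n + (- s) *: 'X^0 by rewrite expr0 scaleNr alg_polyC.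
  rewrite revND revNZ !revN_Xn !ifT // subnn subn0 expr0 -!mul_polyC.
  have ssP : s%:P * s%:P = 1 :> {poly F} by rewrite -polyCM ss.
  rewrite !polyCN /= mulr1.
  by rewrite mulrBr !mulNr opprK ssP addrC.
have ns0 : - s != 0 by rewrite oppr_eq0.
rewrite -(dvdpZr _ _ ns0) -E1.
have Es : n.+1 = (size h + size g).-1.
  by rewrite -size_mul // mulrC ghf size_XnsubC.
by rewrite Es -ghf mulrC revNM // dvdp_mulIl.
Qed.
End Facts.
Section Gray.
Variable F : fieldType.
Variable n : nat.
Hypothesis n_gt0 : (0 < n)%N.
Variable s : F.
Hypothesis ss : s * s = 1.
Hypothesis two0 : (2%:R : F) != 0.
Implicit Types y z g h : {poly F}.

Definition gray2 (c1 c2 : {poly F}) : {poly F} := (c1 - c2) + s *: ('X^n * (c1 + c2)).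

Lemma s_neq0 : s != 0.
Proof. by apply: contra_eq_neq ss => ->; rewrite mulr0 eq_sym oner_neq0. Qed.

Lemma dual_char g h (d : {poly F}) : g \is monic -> g * h = 'X^n - s%:P -> (size d <= n)%N ->
  (forall a, ipn n ((a * g) %% ('X^n - s%:P)) d = 0) <-> (revN (size h) h %| d).
Proof.
move=> gm ghf sd.
have [h0 shn] := hprops n_gt0 s_neq0 gm ghf.
by rewrite (key3 n_gt0 gm ghf sd) key4.
Qed.

Lemma gray_mod1 (c1 c2 : {poly F}) : (size c1 <= n)%N -> (size c2 <= n)%N ->
  gray2 c1 c2 %% ('X^n - s%:P) = c1 *+ 2.
Proof.
move=> s1 s2; apply/esym/(@modpP _ _ (s *: (c1 + c2))); last first.
  by rewrite size_XnsubC // ltnS mulr2n (leq_trans (size_polyD _ _)) // geq_max s1.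
rewrite /gray2 -!mul_polyC; set S := s%:P.
have SS : S * S = 1 by rewrite -polyCM ss.
apply/eqP; rewrite -subr_eq0.
have -> : c1 - c2 + S * ('X^n * (c1 + c2)) - (S * (c1 + c2) * ('X^n - S) + c1 *+ 2)
   = (S * S - 1) * (c1 + c2) by ring.
by rewrite SS subrr mul0r.
Qed.

Lemma gray_mod2 (c1 c2 : {poly F}) : (size c1 <= n)%N -> (size c2 <= n)%N ->
  gray2 c1 c2 %% ('X^n - (- s)%:P) = - c2 *+ 2.
Proof.
move=> s1 s2; apply/esym/(@modpP _ _ (s *: (c1 + c2))); last first.
  by rewrite size_XnsubC // ltnS mulr2n (leq_trans (size_polyD _ _)) // size_opp geq_max s2.
rewrite /gray2 -!mul_polyC polyCN; set S := s%:P.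
have SS : S * S = 1 by rewrite -polyCM ss.
apply/eqP; rewrite -subr_eq0.
have -> : c1 - c2 + S * ('X^n * (c1 + c2)) - (S * (c1 + c2) * ('X^n - - S) + - c2 *+ 2)
   = (1 - S * S) * (c1 + c2) by ring.
by rewrite SS subrr mul0r.
Qed.
End Gray.
Section Gray2.
Variable F : fieldType.
Variable n : nat.
Hypothesis n_gt0 : (0 < n)%N.
Variable s : F.
Hypothesis ss : s * s = 1.
Hypothesis two0 : (2%:R : F) != 0.
Local Notation f1 := ('X^n - s%:P).
Local Notation f2 := ('X^n - (- s)%:P).
Local Notation gray2 := (gray2 n s).

Lemma f12 : f1 * f2 = 'X^(n.*2) - 1.
Proof.
rewrite polyCN -addnn exprD -[1](polyC1) -ss polyCM; set S := s%:P.
by move: ('X^n) => x; ring.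
Qed.

Lemma coprime12 : coprimep f1 f2.
Proof.
have -> : f2 = 1 * f1 + (s *+ 2)%:P.
  by rewrite mul1r polyCN polyCMn mulr2n; move: ('X^n) (s%:P) => x y; ring.
rewrite coprimep_addl_mul -[(s *+ 2)%:P]mulr1 mul_polyC coprimepZr ?coprimep1 //.
by rewrite -mulr_natr mulf_neq0 // (s_neq0 ss).
Qed.

Lemma size_gray2 (c1 c2 : {poly F}) : (size c1 <= n)%N -> (size c2 <= n)%N ->
  (size (gray2 c1 c2) <= n.*2)%N.
Proof.
move=> s1 s2; rewrite /gray2 (leq_trans (size_polyD _ _)) // geq_max.
rewrite (leq_trans (size_polyD _ _)) ?geq_max ?size_opp ?(leq_trans s1) ?(leq_trans s2) ?leq_double ?leq_addr //=;
  try by rewrite -addnn leq_addr.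
rewrite (leq_trans (size_scale_leq _ _)) // (leq_trans (size_polyMleq _ _)) // size_polyXn.
have : (size (c1 + c2)%R <= n)%N by rewrite (leq_trans (size_polyD _ _)) // geq_max s1.
by move: (size (c1 + c2)%R) => x; rewrite -addnn; lia.
Qed.

Lemma gray_uniq (y z : {poly F}) : (size y <= n.*2)%N -> (size z <= n.*2)%N ->
  y %% f1 = z %% f1 -> y %% f2 = z %% f2 -> y = z.
Proof.
move=> sy sz e1 e2; apply/eqP; rewrite -subr_eq0; apply/eqP.
have d1 : f1 %| y - z by rewrite /dvdp modpD modpN e1 subrr.
have d2 : f2 %| y - z by rewrite /dvdp modpD modpN e2 subrr.
have d12 : f1 * f2 %| y - z by rewrite Gauss_dvdp ?coprime12 ?d1.
apply/eqP; apply: contraT => nz; have := dvdp_leq nz d12.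
rewrite f12 size_XnsubC; last by rewrite -addnn; lia.
by rewrite ltnNge (leq_trans (size_polyD _ _)) // geq_max sy size_opp sz.
Qed.

Definition ginv1 (y : {poly F}) : {poly F} := (2%:R)^-1 *: (y %% f1).
Definition ginv2 (y : {poly F}) : {poly F} := - ((2%:R)^-1 *: (y %% f2)).

Lemma size_modn (y : {poly F}) (t : F) : (size (y %% ('X^n - t%:P))%R <= n)%N.
Proof. by rewrite -ltnS -(size_XnsubC t n_gt0) ltn_modp -size_poly_eq0 size_XnsubC. Qed.

Lemma size_ginv1 (y : {poly F}) : (size (ginv1 y) <= n)%N.
Proof. by rewrite (leq_trans (size_scale_leq _ _)) // size_modn. Qed.

Lemma size_ginv2 (y : {poly F}) : (size (ginv2 y) <= n)%N.
Proof. by rewrite size_opp (leq_trans (size_scale_leq _ _)) // size_modn. Qed.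

Lemma half2 : (2%:R : F)^-1 *+ 2 = 1.
Proof. by rewrite -(mulr_natr ((2%:R : F)^-1) 2) mulVf. Qed.

Lemma ginvK (y : {poly F}) : (size y <= n.*2)%N -> gray2 (ginv1 y) (ginv2 y) = y.
Proof.
move=> sy; apply: gray_uniq => //.
- by rewrite size_gray2 // ?size_ginv1 ?size_ginv2.
- rewrite gray_mod1 // ?size_ginv1 ?size_ginv2 //.
  by rewrite /ginv1 scalerMnl half2 scale1r.
- rewrite gray_mod2 // ?size_ginv1 ?size_ginv2 //.
  by rewrite /ginv2 opprK scalerMnl half2 scale1r.
Qed.

Lemma coef_gray2 (c1 c2 : {poly F}) i :
  (gray2 c1 c2)`_i = (c1 - c2)`_i + s * (if (i < n)%N then 0 else (c1 + c2)`_(i - n)).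
Proof. by rewrite /gray2 coefD coefZ coefXnM. Qed.

Lemma gray_iso (c1 c2 d1 d2 : {poly F}) :
  (size c1 <= n)%N -> (size c2 <= n)%N -> (size d1 <= n)%N -> (size d2 <= n)%N ->
  \sum_(i < n.*2) (gray2 c1 c2)`_i * (gray2 d1 d2)`_i
   = 2%:R * (ipn n c1 d1 + ipn n c2 d2).
Proof.
move=> sc1 sc2 sd1 sd2.
rewrite -addnn big_split_ord /= /ipn -!big_split /= mulr_sumr.
apply: eq_bigr => i _.
rewrite !coef_gray2 /= ltn_ord mulr0 !addr0 ltnNge leq_addr /= addKn.
have z : forall q : {poly F}, (size q <= n)%N -> q`_(n + i) = 0.
  by move=> q sq; rewrite nth_default // (leq_trans sq) // leq_addr.
rewrite !(coefD, coefN) (z _ sc1) (z _ sc2) (z _ sd1) (z _ sd2) !oppr0 !addr0 !add0r.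
move: (c1`_i) (c2`_i) (d1`_i) (d2`_i) => a b c d.
apply/eqP; rewrite -subr_eq0; apply/eqP.
transitivity ((s * s - 1) * (a + b) * (c + d)); first by ring.
by rewrite ss subrr !mul0r.
Qed.
End Gray2.

Section RP.
Variable p : nat.
Local Notation K := 'F_p.
Local Notation RR := (Rp p).
Implicit Types c d : {poly RR}.

Definition cf (c : {poly RR}) : {poly K} := map_poly (@fst K K) c.
Definition cs (c : {poly RR}) : {poly K} := map_poly (@snd K K) c.

Lemma coef_cf c i : (cf c)`_i = (c`_i).1.
Proof. by rewrite /cf coef_map. Qed.
Lemma coef_cs c i : (cs c)`_i = (c`_i).2.
Proof. by rewrite /cs coef_map. Qed.

Lemma poly_pair_eq c d : cf c = cf d -> cs c = cs d -> c = d.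
Proof.
move=> e1 e2; apply/polyP=> i.
have := congr1 (fun q : {poly K} => q`_i) e1; have := congr1 (fun q : {poly K} => q`_i) e2.
rewrite /= !coef_cf !coef_cs.
by case: (c`_i) (d`_i) => [a b] [a' b'] /= -> ->.
Qed.

Lemma size_cf c : (size (cf c) <= size c)%N.
Proof. exact: size_poly. Qed.
Lemma size_cs c : (size (cs c) <= size c)%N.
Proof. exact: size_poly. Qed.

Definition pairP (a b : {poly K}) : {poly RR} :=
  \poly_(i < maxn (size a) (size b)) ((a`_i, b`_i) : RR).

Lemma cf_pair (a b : {poly K}) : cf (pairP a b) = a.
Proof.
apply/polyP=> i; rewrite coef_cf coef_poly; case: ltnP => //=.
by rewrite geq_max => /andP [h _]; rewrite nth_default.
Qed.
Lemma cs_pair (a b : {poly K}) : cs (pairP a b) = b.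
Proof.
apply/polyP=> i; rewrite coef_cs coef_poly; case: ltnP => //=.
by rewrite geq_max => /andP [_ h]; rewrite nth_default.
Qed.
Lemma size_pair (a b : {poly K}) n : (size a <= n)%N -> (size b <= n)%N -> (size (pairP a b) <= n)%N.
Proof. by move=> ha hb; rewrite (leq_trans (size_poly _ _)) // geq_max ha. Qed.

Lemma gray_eq n (lam mu : K) c : lam * lam = 1 -> lam + mu = - lam ->
  grayPhi n lam mu c = gray2 n lam (cf c) (cs c).
Proof.
move=> ll lm.
have er : map_poly (@rpart p) c = cf c.
  by apply/polyP=> i; rewrite coef_map_id0 // coef_cf.
have eq : map_poly (@qpart p) c = cs c - cf c.
  apply/polyP=> i; rewrite coef_map_id0; last by rewrite /qpart subrr.
  by rewrite coefB coef_cf coef_cs.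
have emu : mu = - lam - lam by apply/(addrI lam); rewrite lm addrA subrr add0r.
rewrite /grayPhi /gray2 er eq lm emu -!mul_polyC !polyCM !polyCB !polyCN.
set L := lam%:P; have LL : L * L = 1 by rewrite -polyCM ll.
move: (cf c) (cs c) ('X^n) => a b x.
apply/eqP; rewrite -subr_eq0; apply/eqP.
transitivity ((1 - L * L) * (b - a)); first by ring.
by rewrite LL subrr mul0r.
Qed.
End RP.
Section RP2.
Variable p : nat.
Local Notation K := 'F_p.
Local Notation RR := (Rp p).
Variable n : nat.
Hypothesis n_gt0 : (0 < n)%N.

Lemma map_rmod (phi : {rmorphism RR -> K}) (P Q : {poly RR}) : Q \is monic ->
  map_poly phi (Pdiv.Ring.rmodp P Q) = map_poly phi P %% map_poly phi Q.
Proof.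
move=> mQ; have e := Pdiv.RingMonic.rdivp_eq mQ P.
apply/(modpP (q := map_poly phi (Pdiv.Ring.rdivp P Q))).
  by rewrite {1}e rmorphD rmorphM.
rewrite [size (map_poly phi Q)]size_map_poly_id0; last by rewrite (eqP mQ) rmorph1 oner_neq0.
apply: leq_ltn_trans (size_poly _ _) _.
by apply: Pdiv.Ring.ltn_rmodpN0; apply: monic_neq0.
Qed.

Lemma cf_emb (g : {poly K}) : cf (map_poly (@embF p) g) = g.
Proof. by apply/polyP=> i; rewrite coef_cf coef_map_id0. Qed.
Lemma cs_emb (g : {poly K}) : cs (map_poly (@embF p) g) = g.
Proof. by apply/polyP=> i; rewrite coef_cs coef_map_id0. Qed.

Lemma cf_C (x : RR) : cf x%:P = (x.1)%:P.
Proof. by rewrite /cf map_polyC. Qed.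
Lemma cs_C (x : RR) : cs x%:P = (x.2)%:P.
Proof. by rewrite /cs map_polyC. Qed.

Variables (lam mu : K) (g1 g2 : {poly K}).

Definition Fth : {poly RR} := 'X^n - (thetaR lam mu)%:P.
Definition genR (a b : {poly RR}) : {poly RR} :=
  Pdiv.Ring.rmodp (a * ((vR p)%:P * map_poly (@embF p) g1)
               + b * ((1 - vR p)%:P * map_poly (@embF p) g2)) Fth.

Lemma comp_gen a b :
  cf (genR a b) = (cf b * g2) %% ('X^n - lam%:P) /\
  cs (genR a b) = (cs a * g1) %% ('X^n - (lam + mu)%:P).
Proof.
have mF : Fth \is monic by apply: monicXnsubC.
split.
  rewrite /cf /genR map_rmod // /Fth !rmorphD !rmorphM ?rmorphN /= !map_polyC /=.
  rewrite map_polyXn -!/(cf _) !cf_emb /thetaR /embF /vR /=.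
  rewrite -polyCB -polyCM -polyCD !cf_C /=.
  by rewrite ?(mul0r, addr0, subr0, polyC0, polyC1, mulr0, add0r, mul1r).
rewrite /cs /genR map_rmod // /Fth !rmorphD !rmorphM ?rmorphN /= !map_polyC /=.
rewrite map_polyXn -!/(cs _) !cs_emb /thetaR /embF /vR /=.
rewrite -polyCB -polyCM -polyCD !cs_C /=.
by rewrite ?(mul1r, subrr, polyC0, polyC1, mul0r, mulr0, addr0, mul1r) polyCD.
Qed.

Lemma ideal_char c : constaIdeal n lam mu g1 g2 c <->
  exists x y, cf c = (x * g2) %% ('X^n - lam%:P) /\
              cs c = (y * g1) %% ('X^n - (lam + mu)%:P).
Proof.
split.
  by move=> [a [b ->]]; have [e1 e2] := comp_gen a b; exists (cf b), (cs a).
move=> [x [y [e1 e2]]]; exists (map_poly (@embF p) y), (map_poly (@embF p) x).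
have [e1' e2'] := comp_gen (map_poly (@embF p) y) (map_poly (@embF p) x).
apply: poly_pair_eq.
  by rewrite e1 -/(genR _ _) e1' cf_emb.
by rewrite e2 -/(genR _ _) e2' cs_emb.
Qed.
End RP2.
Section Main.
Variable p : nat.
Local Notation K := 'F_p.
Local Notation RR := (Rp p).
Variable n : nat.
Hypothesis n_gt0 : (0 < n)%N.

Lemma sum_cf (c d : {poly RR}) : (\sum_(i < n) c`_i * d`_i).1 = ipn n (cf c) (cf d).
Proof.
rewrite (big_morph (@fst K K) (fun x y => erefl) (erefl : (0 : RR).1 = 0)).
by apply: eq_bigr => i _; rewrite !coef_cf.
Qed.
Lemma sum_cs (c d : {poly RR}) : (\sum_(i < n) c`_i * d`_i).2 = ipn n (cs c) (cs d).
Proof.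
rewrite (big_morph (@snd K K) (fun x y => erefl) (erefl : (0 : RR).2 = 0)).
by apply: eq_bigr => i _; rewrite !coef_cs.
Qed.

Variables (lam mu : K) (g1 g2 : {poly K}).

Lemma dual_comp d : dualR n (constaIdeal n lam mu g1 g2) d <->
  [/\ (size d <= n)%N,
      forall x, ipn n ((x * g2) %% ('X^n - lam%:P)) (cf d) = 0 &
      forall y, ipn n ((y * g1) %% ('X^n - (lam + mu)%:P)) (cs d) = 0].
Proof.
split.
  move=> [sd H]; split => // [x | y].
    have [e1 _] := comp_gen n_gt0 lam mu g1 g2 0 (map_poly (@embF p) x).
    have := congr1 (@fst K K) (H (genR n lam mu g1 g2 0 (map_poly (@embF p) x))
      (ex_intro _ 0 (ex_intro _ (map_poly (@embF p) x) erefl))).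
    by rewrite sum_cf e1 cf_emb.
  have [_ e2] := comp_gen n_gt0 lam mu g1 g2 (map_poly (@embF p) y) 0.
  have := congr1 (@snd K K) (H (genR n lam mu g1 g2 (map_poly (@embF p) y) 0)
      (ex_intro _ (map_poly (@embF p) y) (ex_intro _ 0 erefl))).
  by rewrite sum_cs e2 cs_emb.
move=> [sd H1 H2]; split=> // c /(ideal_char n_gt0) [x [y [e1 e2]]].
have f1 := sum_cf c d; have f2 := sum_cs c d.
rewrite e1 H1 in f1; rewrite e2 H2 in f2.
by move: f1 f2; case: (\sum_(i < n) _) => a b /= -> ->.
Qed.
End Main.

Lemma ipn0 (F : fieldType) n (d : {poly F}) : ipn n 0 d = 0.
Proof. by rewrite /ipn big1 // => i _; rewrite coef0 mul0r. Qed.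

Theorem theorem3p17 (p : nat) (p_prime : prime p) (p_odd : odd p)
  (n : nat) (n_gt0 : (0 < n)%N)
  (lam mu : 'F_p)
  (htheta : (lam = 1 /\ mu = -2) \/ (lam = -1 /\ mu = 2))
  (g1 g2 h1 h2 : {poly 'F_p})
  (g1_monic : g1 \is monic) (g2_monic : g2 \is monic)
  (g1_dvd : g1 %| 'X^n - (lam + mu)%:P) (g2_dvd : g2 %| 'X^n - lam%:P)
  (h1_def : g1 * h1 = 'X^n - (lam + mu)%:P)
  (h2_def : g2 * h2 = 'X^n - lam%:P) :
  let C := constaIdeal n lam mu g1 g2 in
  (forall y, grayImage n lam mu (dualR n C) y
             <-> cyclicCode n.*2 (hstar h1 * hstar h2) y)
  /\
  (forall y, grayImage n lam mu (dualR n C) y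
             <-> dualF n.*2 (grayImage n lam mu C) y).
Proof.
move=> C; rewrite {}/C.
have [ll lm] : lam * lam = 1 /\ lam + mu = - lam.
  by case: htheta => [[-> ->] | [-> ->]]; split; ring.
have two0 : (2%:R : 'F_p) != 0.
  rewrite -(dvdn_pcharf (pchar_Fp p_prime)); apply/negP => /(dvdn_leq (isT : (0 < 2)%N)).
  have := prime_gt1 p_prime; case: p p_odd {p_prime htheta g1 g2 h1 h2 g1_monic g2_monic g1_dvd g2_dvd h1_def h2_def ll lm lam mu} => [|[|[|k]]] //.
rewrite lm in h1_def.
have ss2 : (- lam) * (- lam) = 1 by rewrite mulrNN.
set R1 := revN (size h1) h1; set R2 := revN (size h2) h2.
have R2f1 : R2 %| 'X^n - lam%:P := recip_dvd n_gt0 ll g2_monic h2_def.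
have R1f2 : R1 %| 'X^n - (- lam)%:P := recip_dvd n_gt0 ss2 g1_monic h1_def.
have DC1 : forall d : {poly 'F_p}, (size d <= n)%N ->
    (forall x, ipn n ((x * g2) %% ('X^n - lam%:P)) d = 0) <-> (R2 %| d).
  by move=> d sd; apply: dual_char.
have DC2 : forall d : {poly 'F_p}, (size d <= n)%N ->
    (forall x, ipn n ((x * g1) %% ('X^n - (- lam)%:P)) d = 0) <-> (R1 %| d).
  by move=> d sd; apply: dual_char.
have sz1 : forall c : {poly Rp p}, (size c <= n)%N -> (size (cf c) <= n)%N.
  by move=> c sc; apply: leq_trans (size_cf c) sc.
have sz2 : forall c : {poly Rp p}, (size c <= n)%N -> (size (cs c) <= n)%N.
  by move=> c sc; apply: leq_trans (size_cs c) sc.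
have i0 : (2%:R : 'F_p)^-1 != 0 by rewrite invr_eq0.
have DY : forall y, grayImage n lam mu (dualR n (constaIdeal n lam mu g1 g2)) y <->
    [&& (size y <= n.*2)%N, R2 %| y %% ('X^n - lam%:P) & R1 %| y %% ('X^n - (- lam)%:P)].
  move=> y; split.
    move=> [d [/(dual_comp n_gt0) [sd H1 H2] ->]].
    rewrite lm in H2.
    have d1 := (DC1 _ (sz1 _ sd)).1 H1; have d2 := (DC2 _ (sz2 _ sd)).1 H2.
    rewrite gray_eq // size_gray2 ?sz1 ?sz2 //=.
    rewrite gray_mod1 ?sz1 ?sz2 // gray_mod2 ?sz1 ?sz2 //.
    by rewrite !mulr2n !dvdp_add // dvdpNr.
  move=> /and3P [sy dy1 dy2].
  exists (pairP (ginv1 n lam y) (ginv2 n lam y)); split; last first.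
    by rewrite gray_eq // cf_pair cs_pair ginvK.
  apply/(dual_comp n_gt0); rewrite lm; split.
  - by rewrite size_pair ?size_ginv1 ?size_ginv2.
  - by apply/DC1; rewrite cf_pair ?size_ginv1 // /ginv1 dvdpZr.
  - by apply/DC2; rewrite cs_pair ?size_ginv2 // /ginv2 dvdpNr dvdpZr.
have [h10 _] := hprops n_gt0 (s_neq0 ss2) g1_monic h1_def.
have [h20 _] := hprops n_gt0 (s_neq0 ll) g2_monic h2_def.
have hs : hstar h1 * hstar h2 = ((h1`_0)^-1 * (h2`_0)^-1) *: (R1 * R2).
  by rewrite /hstar -scalerAl -scalerAr scalerA.
have cn0 : (h1`_0)^-1 * (h2`_0)^-1 != 0 by rewrite mulf_neq0 // invr_eq0.
have cop : coprimep R1 R2.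
  have := @coprime12 _ n lam ll two0; rewrite coprimep_sym => c.
  exact: coprimep_dvdl R2f1 (coprimep_dvdr R1f2 c).
have sF : size ('X^(n.*2) - 1 : {poly 'F_p}) = n.*2.+1.
  by rewrite -polyC1 size_XnsubC // double_gt0.
split=> y; rewrite DY.
  split.
    move=> /and3P [sy dy1 dy2].
    have e1 : R2 %| y by rewrite (dvdp_mod _ R2f1).
    have e2 : R1 %| y by rewrite (dvdp_mod _ R1f2).
    have : hstar h1 * hstar h2 %| y by rewrite hs dvdpZl // Gauss_dvdp // e1 e2.
    move=> /dvdpP [a Ha]; exists a; rewrite -Ha modp_small // sF ltnS //.
  move=> [a ->].
  have PF : hstar h1 * hstar h2 %| 'X^(n.*2) - 1.
    by rewrite hs dvdpZl // -(@f12 _ n lam ll) mulrC dvdp_mul.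
  have Py : hstar h1 * hstar h2 %| (a * (hstar h1 * hstar h2)) %% ('X^(n.*2) - 1).
    by rewrite -(dvdp_mod _ PF) dvdp_mull.
  have RP : R1 * R2 %| hstar h1 * hstar h2 by rewrite hs dvdpZr.
  have R2y := dvdp_trans (dvdp_mulIr R1 R2) (dvdp_trans RP Py).
  have R1y := dvdp_trans (dvdp_mulIl R1 R2) (dvdp_trans RP Py).
  apply/and3P; split.
  - by rewrite -ltnS -sF ltn_modp -size_poly_eq0 sF.
  - by rewrite -(dvdp_mod _ R2f1).
  - by rewrite -(dvdp_mod _ R1f2).
have cs0 : cs (0 : {poly Rp p}) = 0 by rewrite /cs rmorph0.
have cf0 : cf (0 : {poly Rp p}) = 0 by rewrite /cf rmorph0.
rewrite -DY; split.
  move=> [d [/(dual_comp n_gt0) [sd H1 H2] ->]]; rewrite lm in H2.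
  split; first by rewrite gray_eq // size_gray2 ?sz1 ?sz2.
  move=> z [c [/(ideal_char n_gt0) [x [y' [e1 e2]]] ->]].
  rewrite lm in e2.
  have sc1 : (size (cf c) <= n)%N by rewrite e1 size_modn.
  have sc2 : (size (cs c) <= n)%N by rewrite e2 size_modn.
  by rewrite !gray_eq // gray_iso ?sc1 ?sc2 ?sz1 ?sz2 // e1 e2 H1 H2 addr0 mulr0.
move=> [sy H].
exists (pairP (ginv1 n lam y) (ginv2 n lam y)); split; last first.
  by rewrite gray_eq // cf_pair cs_pair ginvK.
apply/(dual_comp n_gt0); rewrite lm; split.
- by rewrite size_pair ?size_ginv1 ?size_ginv2.
- move=> x; rewrite cf_pair.
  set c := genR n lam mu g1 g2 0 (map_poly (@embF p) x).
  have [e1 e2] := comp_gen n_gt0 lam mu g1 g2 0 (map_poly (@embF p) x).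
  rewrite -/c cf_emb in e1; rewrite -/c lm cs0 mul0r mod0p in e2.
  have Hy := H (grayPhi n lam mu c)
    (ex_intro _ c (conj (ex_intro _ 0 (ex_intro _ (map_poly (@embF p) x) erefl)) erefl)).
  rewrite gray_eq // -(ginvK n_gt0 ll two0 sy) gray_iso ?size_ginv1 ?size_ginv2
     ?e1 ?e2 ?size_modn ?size_poly0 // in Hy.
  by move: Hy; rewrite ipn0 addr0 => /eqP; rewrite mulf_eq0 (negbTE two0) => /eqP.
- move=> x; rewrite cs_pair.
  set c := genR n lam mu g1 g2 (map_poly (@embF p) x) 0.
  have [e1 e2] := comp_gen n_gt0 lam mu g1 g2 (map_poly (@embF p) x) 0.
  rewrite -/c cs_emb lm in e2; rewrite -/c cf0 mul0r mod0p in e1.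
  have Hy := H (grayPhi n lam mu c)
    (ex_intro _ c (conj (ex_intro _ (map_poly (@embF p) x) (ex_intro _ 0 erefl)) erefl)).
  rewrite gray_eq // -(ginvK n_gt0 ll two0 sy) gray_iso ?size_ginv1 ?size_ginv2
     ?e1 ?e2 ?size_modn ?size_poly0 // in Hy.
  by move: Hy; rewrite ipn0 add0r => /eqP; rewrite mulf_eq0 (negbTE two0) => /eqP.
Qed.
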